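(* Let $m\ge2$, $q\ge2$ be integers, $A$ a primitive $m\times m$ matrix with entries in $\{0,1\}$, and $\Sigma_A=\{(x_k)_{k\ge1}\in\{0,\dots,m-1\}^{\mathbb N}:\ A(x_k,x_{k+1})=1 \ \forall k\}$. Let $(t_i)_{i=0}^{m-1}$ be the unique vector with $t_i>1$ and $t_i^q=\sum_j A(i,j)t_j$ for all $i$. Then the unique Borel probability measure $\mu$ on $\Sigma_A$ maximizing $s(\Sigma_A,\mu)$ is the Markov measure with initial probability vector $\mathbf{p}=\bigl(\sum_{i=0}^{m-1}t_i\bigr)^{-1}(t_0,\dots,t_{m-1})$ and transition probabilities $p_{ij}=t_j/t_i^q$ if $A(i,j)=1$ (and $p_{ij}=0$ otherwise).
   Context: A non-negative matrix is primitive if some power is strictly positive. For a closed $\Omega\subset\Sigma_m$ and Borel probability $\mu$ on $\Omega$: $[u]$ is the cylinder of sequences beginning with word $u$, $\alpha_k=\{\Omega\cap[u]:\ u\in\{0,\dots,m-1\}^k,\ \Omega\cap[u]\ne\emptyset\}$, $H_m^\mu(\alpha)=-\sum_{C\in\alpha}\mu(C)\log_m\mu(C)$, and $s(\Omega,\mu)=(q-1)^2\sum_{k\ge1}H_m^\mu(\alpha_k)/q^{k+1}$. *)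

(* Defs.v *)
From Stdlib Require Import Reals Lra List Arith ClassicalEpsilon.
Import ListNotations.
Open Scope R_scope.

Definition sumR (n : nat) (f : nat -> R) : R :=
  fold_right Rplus 0 (map f (seq 0 n)).

(** 0/1 matrix A given as a boolean function on indices (only i,j < m matter). *)
Definition entry (A : nat -> nat -> bool) (i j : nat) : R := if A i j then 1 else 0.

Fixpoint mxpow (m : nat) (A : nat -> nat -> bool) (n : nat) (i j : nat) : R :=
  match n with
  | O => if Nat.eqb i j then 1 else 0
  | S n' => sumR m (fun k => mxpow m A n' i k * entry A k j)
  end.

Definition primitive01 (m : nat) (A : nat -> nat -> bool) : Prop :=
  exists n : nat, forall i j, (i < m)%nat -> (j < m)%nat -> 0 < mxpow m A n i j.

(** Sigma_A : one-sided sequences (indexed from 0) over {0..m-1} with A(x_k,x_{k+1}) = 1 *)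
Definition in_SigmaA (m : nat) (A : nat -> nat -> bool) (x : nat -> nat) : Prop :=
  forall k, (x k < m)%nat /\ A (x k) (x (S k)) = true.

Definition has_prefix (x : nat -> nat) (u : list nat) : Prop :=
  forall k, (k < length u)%nat -> x k = nth k u O.

Definition cyl_nonempty (m : nat) (A : nat -> nat -> bool) (u : list nat) : Prop :=
  exists x, in_SigmaA m A x /\ has_prefix x u.

(** A Borel probability measure on Sigma_A, represented (Caratheodory/Kolmogorov)
    by its values on cylinders: nu u = mu(Sigma_A ∩ [u]). *)
Definition cyl_measure (m : nat) (A : nat -> nat -> bool) (nu : list nat -> R) : Prop :=
  nu [] = 1 /\
  (forall u, 0 <= nu u) /\
  (forall u, nu u = sumR m (fun a => nu (u ++ [a]))) /\
  (forall u, ~ cyl_nonempty m A u -> nu u = 0).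

Fixpoint words (m k : nat) : list (list nat) :=
  match k with
  | O => [[]]
  | S k' => flat_map (fun u => map (fun a => u ++ [a]) (seq 0 m)) (words m k')
  end.

Definition ent (m : nat) (x : R) : R := - x * (ln x / ln (INR m)).

(** H_m^nu(alpha_k): sum over the (nonempty) cells Sigma_A ∩ [u], |u| = k *)
Definition Hk (m : nat) (A : nat -> nat -> bool) (nu : list nat -> R) (k : nat) : R :=
  fold_right Rplus 0
    (map (fun u => if excluded_middle_informative (cyl_nonempty m A u)
                   then ent m (nu u) else 0) (words m k)).

(** s(Sigma_A, nu) = l, i.e. (q-1)^2 sum_{k>=1} H(alpha_k)/q^(k+1) converges to l *)
Definition s_is (m q : nat) (A : nat -> nat -> bool) (nu : list nat -> R) (l : R) : Prop :=
  infinite_sum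
    (fun n => (INR q - 1) ^ 2 * Hk m A nu (S n) / INR q ^ (S (S n))) l.

Definition init_p (m : nat) (t : nat -> R) (i : nat) : R :=
  if Nat.ltb i m then t i / sumR m t else 0.

Definition trans_p (m q : nat) (A : nat -> nat -> bool) (t : nat -> R) (i j : nat) : R :=
  if (Nat.ltb i m && Nat.ltb j m && A i j)%bool then t j / t i ^ q else 0.

Fixpoint markov_from (m q : nat) (A : nat -> nat -> bool) (t : nat -> R)
    (i : nat) (u : list nat) : R :=
  match u with
  | [] => 1
  | j :: u' => trans_p m q A t i j * markov_from m q A t j u'
  end.

Definition markov (m q : nat) (A : nat -> nat -> bool) (t : nat -> R) (u : list nat) : R :=
  match u with
  | [] => 1
  | i :: u' => init_p m t i * markov_from m q A t i u'
  end.

(* Main.v *)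
Require Import Defs.
From Stdlib Require Import Reals Lra Lia List Arith Classical ClassicalEpsilon.
Import ListNotations.
Open Scope R_scope.


Definition lsum {T} (f : T -> R) (l : list T) : R := fold_right Rplus 0 (map f l).

Lemma lsum_nil {T} (f : T -> R) : lsum f [] = 0.
Proof. reflexivity. Qed.
Lemma lsum_cons {T} (f : T -> R) x l : lsum f (x :: l) = f x + lsum f l.
Proof. reflexivity. Qed.
Lemma lsum_app {T} (f : T -> R) l1 l2 : lsum f (l1 ++ l2) = lsum f l1 + lsum f l2.
Proof. induction l1; unfold lsum in *; simpl; [ring|]. rewrite IHl1; ring. Qed.
Lemma lsum_map {T U} (f : U -> R) (g : T -> U) l : lsum f (map g l) = lsum (fun x => f (g x)) l.
Proof. unfold lsum; rewrite map_map; reflexivity. Qed.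
Lemma lsum_flat_map {T U} (f : U -> R) (g : T -> list U) l :
  lsum f (flat_map g l) = lsum (fun x => lsum f (g x)) l.
Proof. induction l; simpl; [reflexivity|]. rewrite lsum_app, IHl. reflexivity. Qed.
Lemma lsum_ext_in {T} (f g : T -> R) l : (forall x, In x l -> f x = g x) -> lsum f l = lsum g l.
Proof. induction l; intros H; [reflexivity|]. rewrite !lsum_cons, H, IHl; auto; [intros; apply H|]; simpl; auto. Qed.
Lemma lsum_plus {T} (f g : T -> R) l : lsum (fun x => f x + g x) l = lsum f l + lsum g l.
Proof. induction l; [simpl; unfold lsum; simpl; ring|]. rewrite !lsum_cons, IHl; ring. Qed.
Lemma lsum_scal {T} (c : R) (f : T -> R) l : lsum (fun x => c * f x) l = c * lsum f l.
Proof. induction l; [unfold lsum; simpl; ring|]. rewrite !lsum_cons, IHl; ring. Qed.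
Lemma lsum_minus {T} (f g : T -> R) l : lsum (fun x => f x - g x) l = lsum f l - lsum g l.
Proof. induction l; [unfold lsum; simpl; ring|]. rewrite !lsum_cons, IHl; ring. Qed.
Lemma lsum_le_in {T} (f g : T -> R) l : (forall x, In x l -> f x <= g x) -> lsum f l <= lsum g l.
Proof. induction l; intros H; [unfold lsum; simpl; lra|]. rewrite !lsum_cons.
  assert (f a <= g a) by (apply H; simpl; auto). assert (lsum f l <= lsum g l) by (apply IHl; intros; apply H; simpl; auto). lra. Qed.
Lemma lsum_nonneg {T} (f : T -> R) l : (forall x, In x l -> 0 <= f x) -> 0 <= lsum f l.
Proof. intros H. replace 0 with (lsum (fun _ : T => 0) l). apply lsum_le_in; auto.
  induction l; [reflexivity|]. rewrite lsum_cons, IHl; [ring|]. intros; apply H; simpl; auto. Qed.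
Lemma lsum_elem_le {T} (f : T -> R) l x : (forall y, In y l -> 0 <= f y) -> In x l -> f x <= lsum f l.
Proof. induction l; intros H Hx; [destruct Hx|]. rewrite lsum_cons. destruct Hx as [<-|Hx].
  - assert (0 <= lsum f l) by (apply lsum_nonneg; intros; apply H; simpl; auto). lra.
  - assert (f x <= lsum f l) by (apply IHl; auto; intros; apply H; simpl; auto).
    assert (0 <= f a) by (apply H; simpl; auto). lra. Qed.
Lemma lsum_zero_in {T} (f : T -> R) l x : (forall y, In y l -> 0 <= f y) -> lsum f l = 0 -> In x l -> f x = 0.
Proof. intros H H0 Hx. assert (f x <= lsum f l) by (apply lsum_elem_le; auto).
  assert (0 <= f x) by auto. lra. Qed.

Lemma words_sum (m k : nat) (f : list nat -> R) :
  lsum f (words m (S k)) = lsum (fun u => sumR m (fun a => f (u ++ [a]))) (words m k).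
Proof. simpl. rewrite lsum_flat_map. apply lsum_ext_in; intros. rewrite lsum_map. reflexivity. Qed.

Lemma in_words (m k : nat) u : In u (words m k) -> length u = k /\ Forall (fun a => (a < m)%nat) u.
Proof. revert u; induction k; intros u H; simpl in H.
  - destruct H as [<-|[]]; simpl; auto.
  - apply in_flat_map in H as [v [Hv Hu]]. apply in_map_iff in Hu as [a [<- Ha]].
    apply in_seq in Ha. destruct (IHk v Hv) as [Hl Hf]. split.
    + rewrite length_app; simpl; lia.
    + apply Forall_app; split; auto. constructor; [lia|constructor].
Qed.

Lemma words_in (m : nat) u : Forall (fun a => (a < m)%nat) u -> In u (words m (length u)).
Proof. induction u as [|a u IH] using rev_ind; intros H; simpl; auto.
  apply Forall_app in H as [H1 H2]. inversion H2; subst.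
  rewrite length_app; simpl. rewrite Nat.add_comm; simpl.
  apply in_flat_map. exists u; split; auto. apply in_map_iff. exists a; split; auto. apply in_seq; lia.
Qed.


Lemma nu_total m A nu k : cyl_measure m A nu -> lsum nu (words m k) = 1.
Proof. intros (H0 & Hp & Ha & He). induction k.
  - simpl. unfold lsum; simpl. rewrite H0; ring.
  - rewrite words_sum. rewrite <- IHk. apply lsum_ext_in; intros. rewrite Ha. reflexivity. Qed.

Lemma nu_le1 m A nu k u : cyl_measure m A nu -> In u (words m k) -> nu u <= 1.
Proof. intros H Hu. rewrite <- (nu_total m A nu k H). apply lsum_elem_le; auto.
  intros; destruct H as (_ & Hp & _); auto. Qed.

Fixpoint adm_from (m : nat) (A : nat -> nat -> bool) (i : nat) (w : list nat) : Prop :=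
  match w with [] => True | j :: w' => (j < m)%nat /\ A i j = true /\ adm_from m A j w' end.
Definition adm m A (u : list nat) : Prop :=
  match u with [] => True | i :: w => (i < m)%nat /\ adm_from m A i w end.

Lemma cyl_adm m A u : cyl_nonempty m A u -> adm m A u.
Proof. intros [x [Hx Hp]].
  assert (G : forall w n, (forall k, (k < length w)%nat -> x (S n + k)%nat = nth k w O) -> adm_from m A (x n) w).
  { induction w as [|j w IH]; intros n H; simpl; auto.
    assert (Hj : x (S n) = j) by (specialize (H O); rewrite Nat.add_0_r in H; apply H; simpl; lia).
    destruct (Hx n) as [_ HA]. destruct (Hx (S n)) as [Hl _]. subst j. repeat split; auto.
    apply IH. intros k Hk. replace (S (S n) + k)%nat with (S n + S k)%nat by lia. apply H; simpl; lia. }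
  destruct u as [|i w]; simpl; auto.
  assert (Hi : x O = i) by (apply (Hp O); simpl; lia). subst i. split; [apply Hx|].
  apply G. intros k Hk. apply (Hp (S k)); simpl; lia.
Qed.

Fixpoint ext (s : nat -> nat) (i : nat) (w : list nat) (k : nat) : nat :=
  match w with
  | [] => Nat.iter k s i
  | j :: w' => match k with O => i | S k' => ext s j w' k' end
  end.

Lemma ext0 s i w : ext s i w O = i.
Proof. destruct w; reflexivity. Qed.

Lemma adm_cyl m A (s : nat -> nat) (Hs : forall i, (i < m)%nat -> (s i < m)%nat /\ A i (s i) = true)
  (Hm : (0 < m)%nat) u : adm m A u -> cyl_nonempty m A u.
Proof.
  assert (G : forall w i, (i < m)%nat -> adm_from m A i w -> in_SigmaA m A (ext s i w) /\ has_prefix (ext s i w) (i :: w)).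
  { induction w as [|j w IH]; intros i Hi Ha.
    - split.
      + intros k. simpl. assert (Hk : (Nat.iter k s i < m)%nat).
        { induction k; simpl; auto. apply Hs; auto. }
        split; auto. apply Hs; auto.
      + intros k Hk. simpl in Hk. assert (k = O) by lia. subst; reflexivity.
    - destruct Ha as (Hj & HA & Ha). destruct (IH j Hj Ha) as [H1 H2]. split.
      + intros [|k]; simpl.
        * rewrite ext0. auto.
        * apply H1.
      + intros [|k] Hk; simpl; auto. apply H2. simpl in *; lia. }
  destruct u as [|i w]; intros Ha.
  - exists (ext s O []). split; [apply (G [] O Hm I)|]. intros k Hk; simpl in Hk; lia.
  - destruct Ha as [Hi Ha]. exists (ext s i w). apply G; auto.
Qed.


Section Mk.
Variables (m q : nat) (A : nat -> nat -> bool) (t : nat -> R).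
Hypothesis Hm : (2 <= m)%nat.
Hypothesis Ht : forall i, (i < m)%nat -> 1 < t i.
Hypothesis Heq : forall i, (i < m)%nat -> t i ^ q = sumR m (fun j => entry A i j * t j).

Definition SL (u : list nat) : R := lsum (fun a => ln (t a)) u.

Lemma S_pos : 0 < sumR m t.
Proof. unfold sumR. fold (lsum t (seq 0 m)).
  destruct m as [|m']; [lia|]. simpl. unfold lsum; simpl. fold (lsum t (seq 1 m')).
  assert (0 <= lsum t (seq 1 m')). { apply lsum_nonneg. intros x Hx. apply in_seq in Hx. assert (1 < t x) by (apply Ht; lia). lra. }
  assert (1 < t 0%nat) by (apply Ht; lia). lra. Qed.

Lemma tq_pos i : (i < m)%nat -> 0 < t i ^ q.
Proof. intros Hi. apply pow_lt. assert (1 < t i) by auto. lra. Qed.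

Lemma init_nonneg i : 0 <= init_p m t i.
Proof. unfold init_p. destruct (Nat.ltb_spec i m); [|lra].
  assert (1 < t i) by auto. assert (0 < sumR m t) by apply S_pos.
  apply Rlt_le, Rdiv_lt_0_compat; lra. Qed.

Lemma trans_nonneg i j : 0 <= trans_p m q A t i j.
Proof. unfold trans_p. destruct (Nat.ltb_spec i m); destruct (Nat.ltb_spec j m); destruct (A i j); simpl; try lra.
  assert (1 < t j) by auto. assert (0 < t i ^ q) by (apply tq_pos; auto).
  apply Rlt_le, Rdiv_lt_0_compat; lra. Qed.

Lemma markov_from_nonneg i w : 0 <= markov_from m q A t i w.
Proof. revert i; induction w; intros i; simpl; [lra|]. apply Rmult_le_pos; auto. apply trans_nonneg. Qed.

Lemma markov_nonneg u : 0 <= markov m q A t u.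
Proof. destruct u; simpl; [lra|]. apply Rmult_le_pos; [apply init_nonneg|apply markov_from_nonneg]. Qed.

Lemma last_cons' (j : nat) w (i : nat) : last (j :: w) i = last w j.
Proof. revert j i; induction w as [|n w IH]; intros j i; [reflexivity|].
  change (last (n :: w) i = last (n :: w) j). rewrite !IH. reflexivity. Qed.

Lemma markov_from_snoc i w a :
  markov_from m q A t i (w ++ [a]) = markov_from m q A t i w * trans_p m q A t (last w i) a.
Proof. revert i; induction w as [|j w IH]; intros i; [simpl; ring|].
  rewrite <- app_comm_cons. cbn [markov_from]. rewrite IH, last_cons'. ring. Qed.

Lemma sum_init : sumR m (init_p m t) = 1.
Proof. unfold sumR. fold (lsum (init_p m t) (seq 0 m)).
  rewrite (lsum_ext_in _ (fun i => / sumR m t * t i)).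
  - rewrite lsum_scal. unfold lsum. fold (sumR m t). field. apply Rgt_not_eq, S_pos.
  - intros x Hx. apply in_seq in Hx. unfold init_p. destruct (Nat.ltb_spec x m); [|lia].
    unfold Rdiv; ring. Qed.

Lemma sum_trans j : sumR m (trans_p m q A t j) = if Nat.ltb j m then 1 else 0.
Proof. unfold sumR. fold (lsum (trans_p m q A t j) (seq 0 m)).
  destruct (Nat.ltb_spec j m).
  - rewrite (lsum_ext_in _ (fun a => / t j ^ q * (entry A j a * t a))).
    + rewrite lsum_scal. unfold lsum. fold (sumR m (fun a => entry A j a * t a)). rewrite <- Heq; auto.
      field. apply Rgt_not_eq, tq_pos; auto.
    + intros x Hx. apply in_seq in Hx. unfold trans_p, entry.
      destruct (Nat.ltb_spec j m); [|lia]. destruct (Nat.ltb_spec x m); [|lia].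
      destruct (A j x); simpl; [|ring]. unfold Rdiv; ring.
  - rewrite (lsum_ext_in _ (fun _ => 0 * 0)). rewrite lsum_scal; ring.
    intros x _. unfold trans_p. destruct (Nat.ltb_spec j m); [lia|]. simpl. ring.
Qed.

Lemma nadm_from_0 i w : (i < m)%nat -> ~ adm_from m A i w -> markov_from m q A t i w = 0.
Proof. revert i; induction w as [|j w IH]; intros i Hi Hn; simpl in *; [tauto|].
  destruct (Nat.ltb_spec j m) as [Hj|Hj]; [destruct (A i j) eqn:E|].
  - rewrite IH; [ring|auto|intro; apply Hn; tauto].
  - unfold trans_p. rewrite E. rewrite Bool.andb_false_r. ring.
  - unfold trans_p. destruct (Nat.ltb_spec j m); [lia|]. rewrite Bool.andb_false_r. simpl. ring.
Qed.

Lemma nadm_0 u : ~ adm m A u -> markov m q A t u = 0.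
Proof. destruct u as [|i w]; simpl; [tauto|]. intros Hn.
  destruct (Nat.ltb_spec i m).
  - rewrite nadm_from_0; [ring|auto|intro; apply Hn; tauto].
  - unfold init_p. destruct (Nat.ltb_spec i m); [lia|]. ring. Qed.

Lemma adm_from_last i w : (i < m)%nat -> adm_from m A i w -> (last w i < m)%nat.
Proof. revert i; induction w as [|j w IH]; intros i Hi Ha; [simpl; auto|].
  rewrite last_cons'. destruct Ha as (Hj & _ & Ha). apply IH; auto. Qed.

Lemma markov_cyl : cyl_measure m A (markov m q A t).
Proof.
  assert (Hsucc : forall i, exists j, (i < m)%nat -> (j < m)%nat /\ A i j = true).
  { intros i. destruct (Nat.ltb_spec i m) as [Hi|Hi]; [|exists O; lia].
    destruct (classic (exists j, (j < m)%nat /\ A i j = true)) as [[j Hj]|Hn]; [exists j; auto|].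
    exfalso. assert (H0 : sumR m (fun j => entry A i j * t j) = 0).
    { unfold sumR. fold (lsum (fun j => entry A i j * t j) (seq 0 m)).
      rewrite (lsum_ext_in _ (fun _ => 0 * 0)). rewrite lsum_scal; ring.
      intros x Hx. apply in_seq in Hx. unfold entry. destruct (A i x) eqn:E; [|ring].
      exfalso; apply Hn; exists x; split; auto; lia. }
    rewrite <- Heq in H0; auto. assert (0 < t i ^ q) by (apply tq_pos; auto). lra. }
  destruct (constructive_indefinite_description _ (choice _ Hsucc)) as [s Hs].
  split; [reflexivity|]. split; [apply markov_nonneg|]. split.
  - intros [|i w].
    + transitivity (sumR m (init_p m t)); [rewrite sum_init; reflexivity|].
      unfold sumR. f_equal. apply map_ext. intros; simpl; ring.
    + change (markov m q A t (i::w) = lsum (fun a => markov m q A t ((i :: w) ++ [a])) (seq 0 m)).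
      rewrite (lsum_ext_in _ (fun a => markov m q A t (i :: w) * trans_p m q A t (last w i) a)).
      * rewrite lsum_scal. unfold lsum. fold (sumR m (trans_p m q A t (last w i))).
        rewrite sum_trans. destruct (Nat.ltb_spec (last w i) m); [ring|].
        rewrite (nadm_0 (i :: w)); [ring|]. intros [Hi Ha]. apply adm_from_last in Ha; auto. lia.
      * intros a _. simpl. rewrite markov_from_snoc. ring.
  - intros u Hu. apply nadm_0. intros Ha. apply Hu. apply (adm_cyl m A s); auto.
    lia.
Qed.
End Mk.


Section Mk2.
Variables (m q : nat) (A : nat -> nat -> bool) (t : nat -> R).
Hypothesis Hm : (2 <= m)%nat.
Hypothesis Ht : forall i, (i < m)%nat -> 1 < t i.
Hypothesis Heq : forall i, (i < m)%nat -> t i ^ q = sumR m (fun j => entry A i j * t j).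

Lemma ln_div x y : 0 < x -> 0 < y -> ln (x / y) = ln x - ln y.
Proof. intros. unfold Rdiv. rewrite ln_mult, ln_Rinv; auto; try ring. apply Rinv_0_lt_compat; auto. Qed.

Lemma t_pos i : (i < m)%nat -> 0 < t i.
Proof. intros Hi; assert (1 < t i) by auto; lra. Qed.

Lemma trans_val i j : (i < m)%nat -> (j < m)%nat -> A i j = true -> trans_p m q A t i j = t j / t i ^ q.
Proof. intros Hi Hj HA. unfold trans_p. destruct (Nat.ltb_spec i m); [|lia].
  destruct (Nat.ltb_spec j m); [|lia]. rewrite HA. reflexivity. Qed.

Lemma markov_from_pos i w : (i < m)%nat -> adm_from m A i w -> 0 < markov_from m q A t i w.
Proof. revert i; induction w as [|j w IH]; intros i Hi Ha; simpl; [lra|].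
  destruct Ha as (Hj & HA & Ha). rewrite trans_val; auto.
  apply Rmult_lt_0_compat; auto. apply Rdiv_lt_0_compat; [apply t_pos; auto|apply (tq_pos m q t Ht); auto]. Qed.

Lemma adm_pos u : adm m A u -> 0 < markov m q A t u.
Proof. destruct u as [|i w]; simpl; [lra|]. intros [Hi Ha].
  apply Rmult_lt_0_compat; [|apply markov_from_pos; auto].
  unfold init_p. destruct (Nat.ltb_spec i m); [|lia].
  apply Rdiv_lt_0_compat; [apply t_pos; auto|apply (S_pos m q A t Hm Ht Heq)]. Qed.

Lemma ln_markov_from i w : (i < m)%nat -> adm_from m A i w ->
  ln (markov_from m q A t i w) = (1 - INR q) * SL t w - INR q * ln (t i) + INR q * ln (t (last w i)).
Proof. revert i; induction w as [|j w IH]; intros i Hi Ha.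
  - simpl. unfold SL, lsum; simpl. rewrite ln_1. ring.
  - destruct Ha as (Hj & HA & Ha). cbn [markov_from]. rewrite trans_val; auto.
    assert (Hm1 := markov_from_pos j w Hj Ha).
    assert (Htj := t_pos j Hj). assert (Htq := tq_pos m q t Ht i Hi).
    rewrite ln_mult; [|apply Rdiv_lt_0_compat; auto|auto].
    rewrite ln_div; auto. rewrite ln_pow; [|apply t_pos; auto].
    rewrite IH; auto. rewrite last_cons'. unfold SL. rewrite lsum_cons. ring.
Qed.

Lemma ln_markov_snoc u a : adm m A (u ++ [a]) ->
  ln (markov m q A t (u ++ [a])) = - ln (sumR m t) + (1 - INR q) * SL t u + ln (t a).
Proof. assert (HS := S_pos m q A t Hm Ht Heq).
  destruct u as [|i u]; intros Ha.
  - simpl in Ha. destruct Ha as [Hi _]. simpl. rewrite Rmult_1_r. unfold init_p.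
    destruct (Nat.ltb_spec a m); [|lia]. rewrite ln_div; auto; [|apply t_pos; auto].
    unfold SL, lsum; simpl; ring.
  - rewrite <- app_comm_cons in *. destruct Ha as [Hi Ha]. cbn [markov].
    unfold init_p. destruct (Nat.ltb_spec i m); [|lia].
    rewrite ln_mult; [|apply Rdiv_lt_0_compat; auto; apply t_pos; auto|apply markov_from_pos; auto].
    rewrite ln_markov_from; auto.
    rewrite ln_div; auto; [|apply t_pos; auto]. rewrite last_last.
    unfold SL. rewrite lsum_app, lsum_cons. rewrite lsum_cons, lsum_nil. ring.
Qed.

Lemma adm_forall u : adm m A u -> Forall (fun a => (a < m)%nat) u.
Proof. destruct u as [|i w]; simpl; auto. intros [Hi Ha]. constructor; auto.
  revert i Hi Ha; induction w as [|j w IH]; intros i Hi Ha; auto. destruct Ha as (Hj & _ & Ha).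
  constructor; eauto. Qed.

End Mk2.


Lemma sumR_lsum n f : sumR n f = lsum f (seq 0 n).
Proof. reflexivity. Qed.

Lemma ln_le_xm1 x : 0 < x -> ln x <= x - 1.
Proof. intros Hx. assert (H := exp_ineq1_le (ln x)). rewrite exp_ln in H; auto. lra. Qed.

Lemma ln_eq_xm1 x : 0 < x -> ln x = x - 1 -> x = 1.
Proof. intros Hx He. destruct (Req_dec (ln x) 0) as [H0|H0].
  - rewrite <- (exp_ln x), H0, exp_0; auto.
  - assert (H := exp_ineq1 (ln x) H0). rewrite exp_ln in H; auto. lra. Qed.

Lemma gibbs_term a b : 0 <= a -> 0 <= b -> (0 < a -> 0 < b) -> a * ln b - a * ln a <= b - a.
Proof. intros Ha Hb Hab. destruct (Req_dec a 0) as [->|Ha0]; [lra|].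
  assert (Hapos : 0 < a) by lra. assert (Hbpos := Hab Hapos).
  assert (H := ln_le_xm1 (b / a) (Rdiv_lt_0_compat _ _ Hbpos Hapos)).
  rewrite ln_div in H; auto.
  replace (b - a) with (a * (b / a - 1)) by (field; lra).
  replace (a * ln b - a * ln a) with (a * (ln b - ln a)) by ring.
  apply Rmult_le_compat_l; lra. Qed.

Lemma gibbs_eq a b : 0 <= a -> 0 <= b -> (0 < a -> 0 < b) -> a * ln b - a * ln a = b - a -> a = b.
Proof. intros Ha Hb Hab He. destruct (Req_dec a 0) as [->|Ha0]; [lra|].
  assert (Hapos : 0 < a) by lra. assert (Hbpos := Hab Hapos).
  assert (Hr : ln (b / a) = b / a - 1).
  { rewrite ln_div; auto. apply (Rmult_eq_reg_l a); [|lra].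
    replace (a * (b / a - 1)) with (b - a) by (field; lra). lra. }
  apply ln_eq_xm1 in Hr; [|apply Rdiv_lt_0_compat; auto].
  assert (b = a * (b / a)) by (field; lra). rewrite Hr in H. lra. Qed.

Definition Ek m q A t (nu : list nat -> R) k := lsum (fun u => nu u * ln (markov m q A t u)) (words m k).
Definition Zk m t (nu : list nat -> R) k := lsum (fun u => nu u * SL t u) (words m k).
Definition Nk m (nu : list nat -> R) k := lsum (fun u => nu u * ln (nu u)) (words m k).

Section Nu.
Variables (m q : nat) (A : nat -> nat -> bool) (t : nat -> R).
Hypothesis Hm : (2 <= m)%nat.
Hypothesis Ht : forall i, (i < m)%nat -> 1 < t i.
Hypothesis Heq : forall i, (i < m)%nat -> t i ^ q = sumR m (fun j => entry A i j * t j).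
Variable nu : list nat -> R.
Hypothesis Hnu : cyl_measure m A nu.

Lemma nu_nonneg u : 0 <= nu u.
Proof. destruct Hnu as (_ & H & _); auto. Qed.

Lemma nu_pos_adm u : 0 < nu u -> adm m A u.
Proof. intros H. destruct (classic (adm m A u)) as [|Hn]; auto. exfalso.
  destruct Hnu as (_ & _ & _ & He). rewrite He in H; [lra|]. intros Hc. apply Hn, cyl_adm; auto. Qed.

Lemma nu_zero_or u : nu u = 0 \/ 0 < nu u.
Proof. destruct (nu_nonneg u); auto. Qed.

Lemma Hk_eq k : Hk m A nu k = - Nk m nu k / ln (INR m).
Proof. unfold Hk, Nk. fold (lsum (fun u => if excluded_middle_informative (cyl_nonempty m A u)
                   then ent m (nu u) else 0) (words m k)).
  transitivity (lsum (fun u => (-1 / ln (INR m)) * (nu u * ln (nu u))) (words m k));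
    [|rewrite lsum_scal; unfold Rdiv; ring].
  apply lsum_ext_in. intros u _. unfold ent.
  destruct (excluded_middle_informative (cyl_nonempty m A u)) as [Hc|Hc].
  - unfold Rdiv; ring.
  - destruct Hnu as (_ & _ & _ & He). rewrite He; auto. ring. Qed.

Lemma SL_app u a : SL t (u ++ [a]) = SL t u + ln (t a).
Proof. unfold SL. rewrite lsum_app, lsum_cons, lsum_nil. ring. Qed.

Lemma E_rec k : Ek m q A t nu (S k) = - ln (sumR m t) - INR q * Zk m t nu k + Zk m t nu (S k).
Proof.
  set (B := fun u => lsum (fun a => nu (u ++ [a]) * ln (t a)) (seq 0 m)).
  assert (H1 : Ek m q A t nu (S k) = lsum (fun u => (- ln (sumR m t) + (1 - INR q) * SL t u) * nu u + B u) (words m k)).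
  { unfold Ek. rewrite words_sum. apply lsum_ext_in. intros u _.
    rewrite (sumR_lsum m (fun a => nu (u ++ [a]) * ln (markov m q A t (u ++ [a])))).
    destruct Hnu as (_ & _ & Ha & _). rewrite (Ha u), (sumR_lsum m (fun a => nu (u ++ [a]))).
    unfold B. rewrite <- lsum_scal, <- lsum_plus. apply lsum_ext_in. intros a _.
    destruct (nu_zero_or (u ++ [a])) as [E|E].
    - rewrite E. ring.
    - rewrite (ln_markov_snoc m q A t Hm Ht Heq); [ring|]. apply nu_pos_adm; auto. }
  assert (H2 : Zk m t nu (S k) = lsum (fun u => SL t u * nu u + B u) (words m k)).
  { unfold Zk. rewrite words_sum. apply lsum_ext_in. intros u _.
    rewrite (sumR_lsum m (fun a => nu (u ++ [a]) * SL t (u ++ [a]))).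
    destruct Hnu as (_ & _ & Ha & _). rewrite (Ha u), (sumR_lsum m (fun a => nu (u ++ [a]))).
    unfold B. rewrite <- lsum_scal, <- lsum_plus. apply lsum_ext_in. intros a _.
    rewrite SL_app. ring. }
  assert (H3 : Ek m q A t nu (S k) - Zk m t nu (S k) = - ln (sumR m t) - INR q * Zk m t nu k).
  { rewrite H1, H2, <- lsum_minus.
    rewrite (lsum_ext_in _ (fun u => - ln (sumR m t) * nu u + (- INR q) * (nu u * SL t u))).
    - rewrite lsum_plus, !lsum_scal, (nu_total m A nu k Hnu). unfold Zk. ring.
    - intros; ring. }
  lra.
Qed.

Lemma Zk0 : Zk m t nu 0 = 0.
Proof. unfold Zk. simpl. unfold lsum; simpl. unfold SL, lsum; simpl. ring. Qed.

Definition Lmax := sumR m (fun i => ln (t i)).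

Lemma SL_bound u : Forall (fun a => (a < m)%nat) u -> 0 <= SL t u <= INR (length u) * Lmax.
Proof. induction u as [|a u IH]; intros H; unfold SL in *; cbn [length].
  - unfold lsum; simpl; lra.
  - inversion H; subst. rewrite lsum_cons. destruct (IH H3) as [I1 I2].
    assert (Hl : 0 <= ln (t a) <= Lmax).
    { assert (1 < t a) by auto. split. rewrite <- ln_1. apply Rlt_le, ln_increasing; lra.
      unfold Lmax. rewrite sumR_lsum. apply (lsum_elem_le (fun i => ln (t i))).
      - intros y Hy. apply in_seq in Hy. assert (1 < t y) by (apply Ht; lia). rewrite <- ln_1. apply Rlt_le, ln_increasing; lra.
      - apply in_seq; lia. }
    rewrite S_INR. lra. Qed.

Lemma Z_bound k : 0 <= Zk m t nu k <= INR k * Lmax.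
Proof. unfold Zk. split.
  - apply lsum_nonneg. intros u Hu. apply in_words in Hu as [_ Hf].
    apply Rmult_le_pos; [apply nu_nonneg|apply SL_bound; auto].
  - replace (INR k * Lmax) with (INR k * Lmax * lsum nu (words m k)) by (rewrite (nu_total m A nu k Hnu); ring).
    rewrite <- (lsum_scal (INR k * Lmax)). apply lsum_le_in. intros u Hu. apply in_words in Hu as [Hl Hf].
    rewrite (Rmult_comm (INR k * Lmax)). apply Rmult_le_compat_l; [apply nu_nonneg|]. rewrite <- Hl. apply SL_bound; auto.
Qed.

Lemma gibbs_le k : Ek m q A t nu k - Nk m nu k <= 0.
Proof. unfold Ek, Nk. rewrite <- lsum_minus.
  replace 0 with (lsum (markov m q A t) (words m k) - lsum nu (words m k)).
  2:{ rewrite (nu_total m A nu k Hnu), (nu_total m A _ k (markov_cyl m q A t Hm Ht Heq)). ring. }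
  rewrite <- lsum_minus. apply lsum_le_in. intros u _. apply gibbs_term.
  - apply nu_nonneg.
  - apply (markov_nonneg m q A t Hm Ht Heq).
  - intros H. apply (adm_pos m q A t Hm Ht Heq). apply nu_pos_adm; auto.
Qed.

Lemma gibbs_eq_words k : Ek m q A t nu k - Nk m nu k = 0 -> forall u, In u (words m k) -> nu u = markov m q A t u.
Proof. intros H0 u Hu.
  set (e := fun u => (markov m q A t u - nu u) - (nu u * ln (markov m q A t u) - nu u * ln (nu u))).
  assert (Hpos : forall u, 0 <= e u).
  { intros v. unfold e. assert (nu v * ln (markov m q A t v) - nu v * ln (nu v) <= markov m q A t v - nu v); [|lra].
    apply gibbs_term; [apply nu_nonneg|apply (markov_nonneg m q A t Hm Ht Heq)|].
    intros H. apply (adm_pos m q A t Hm Ht Heq). apply nu_pos_adm; auto. }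
  assert (Hs : lsum e (words m k) = 0).
  { unfold e. rewrite lsum_minus, !lsum_minus. rewrite (nu_total m A nu k Hnu), (nu_total m A _ k (markov_cyl m q A t Hm Ht Heq)).
    unfold Ek, Nk in H0. rewrite <- lsum_minus in H0. rewrite <- lsum_minus, H0. ring. }
  assert (Eu : e u = 0) by (apply (lsum_zero_in e (words m k)); auto).
  apply gibbs_eq; [apply nu_nonneg|apply (markov_nonneg m q A t Hm Ht Heq)| |].
  - intros H. apply (adm_pos m q A t Hm Ht Heq). apply nu_pos_adm; auto.
  - unfold e in Eu. lra.
Qed.

Lemma N_le0 k : Nk m nu k <= 0.
Proof. unfold Nk. replace 0 with (lsum (fun _ : list nat => 0) (words m k)).
  2:{ clear. induction (words m k); [reflexivity|]. rewrite lsum_cons, IHl. ring. }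
  apply lsum_le_in. intros u Hu. destruct (nu_zero_or u) as [E|E]; [rewrite E; lra|].
  assert (nu u <= 1) by (apply (nu_le1 m A nu k); auto).
  assert (ln (nu u) <= 0) by (assert (Hx := ln_le_xm1 _ E); lra).
  rewrite <- (Rmult_0_r (nu u)). apply Rmult_le_compat_l; lra. Qed.

End Nu.

From Coquelicot Require Import Coquelicot.

Lemma nat_sq_le_pow n : (n * S n <= 2 * 2 ^ n)%nat.
Proof. induction n as [|n IH]; [simpl; lia|].
  destruct n as [|[|n]]; [simpl; lia|simpl; lia|].
  rewrite Nat.pow_succ_r'. nia. Qed.

Lemma lim_inv_S : is_lim_seq (fun n => / INR (S n)) 0.
Proof. assert (H := is_lim_seq_INR). apply (is_lim_seq_incr_1 INR) in H.
  apply is_lim_seq_inv in H; [|discriminate]. exact H. Qed.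

Lemma lim_n_over_pow (q : R) : 2 <= q -> is_lim_seq (fun n => INR n / q ^ n) 0.
Proof. intros Hq.
  apply (is_lim_seq_le_le (fun _ => 0) _ (fun n => 2 * / INR (S n))).
  - intros n. assert (H2 : 0 < 2 ^ n) by (apply pow_lt; lra).
    assert (Hqn : 2 ^ n <= q ^ n) by (apply pow_incr; lra).
    assert (HS : 0 < INR (S n)) by (apply lt_0_INR; lia).
    assert (Hn : 0 <= INR n) by apply pos_INR.
    assert (Hk : INR n * INR (S n) <= 2 * 2 ^ n).
    { rewrite <- mult_INR. replace (2 * 2 ^ n) with (INR (2 * 2 ^ n)). apply le_INR, nat_sq_le_pow.
      rewrite mult_INR, pow_INR. replace (INR 2) with 2 by (simpl; ring). ring. }
    split.
    + apply Rmult_le_pos; auto. apply Rlt_le, Rinv_0_lt_compat; lra.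
    + unfold Rdiv. apply (Rmult_le_reg_r (q ^ n * INR (S n))); [apply Rmult_lt_0_compat; lra|].
      replace (INR n * / q ^ n * (q ^ n * INR (S n))) with (INR n * INR (S n)) by (field; lra).
      replace (2 * / INR (S n) * (q ^ n * INR (S n))) with (2 * q ^ n) by (field; lra). lra.
  - apply is_lim_seq_const.
  - replace (Finite 0) with (Rbar_mult 2 0) by (simpl; f_equal; ring).
    apply is_lim_seq_scal_l, lim_inv_S.
Qed.


Definition termX m q A t (nu : list nat -> R) n :=
  (INR q - 1) ^ 2 * (- Ek m q A t nu (S n) / ln (INR m)) / INR q ^ S (S n).
Definition termH m q A (nu : list nat -> R) n :=
  (INR q - 1) ^ 2 * Hk m A nu (S n) / INR q ^ S (S n).

Lemma lim_g (q : nat) : (2 <= q)%nat -> is_lim_seq (fun N => INR (S (S N)) / INR q ^ S (S N)) 0.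
Proof. intros Hq. assert (H := lim_n_over_pow (INR q)).
  assert (2 <= INR q) by (replace 2 with (INR 2) by (simpl; ring); apply le_INR; auto).
  specialize (H H0). apply (is_lim_seq_incr_n _ 2) in H.
  apply (is_lim_seq_ext (fun n => INR (n + 2) / INR q ^ (n + 2))); auto.
  intros n. replace (n + 2)%nat with (S (S n)) by lia. reflexivity. Qed.

Section Main.
Variables (m q : nat) (A : nat -> nat -> bool) (t : nat -> R).
Hypothesis Hm : (2 <= m)%nat.
Hypothesis Hq : (2 <= q)%nat.
Hypothesis Ht : forall i, (i < m)%nat -> 1 < t i.
Hypothesis Heq : forall i, (i < m)%nat -> t i ^ q = sumR m (fun j => entry A i j * t j).

Lemma lnm_pos : 0 < ln (INR m).
Proof. rewrite <- ln_1. apply ln_increasing; [lra|]. replace 1 with (INR 1) by reflexivity. apply lt_INR; lia. Qed.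

Lemma q_ge2 : 2 <= INR q.
Proof. replace 2 with (INR 2) by (simpl; ring); apply le_INR; auto. Qed.

Definition Cst := (INR q - 1) * ln (sumR m t) / (INR q * ln (INR m)).

Lemma partial_X nu (Hnu : cyl_measure m A nu) N :
  sum_f_R0 (termX m q A t nu) N =
  Cst - (INR q - 1) * ln (sumR m t) / ln (INR m) / INR q ^ S (S N)
      - (INR q - 1) ^ 2 / ln (INR m) * Zk m t nu (S N) / INR q ^ S (S N).
Proof. assert (Hl := lnm_pos). assert (Hq2 := q_ge2).
  induction N as [|N IH].
  - simpl sum_f_R0. unfold termX, Cst. rewrite (E_rec m q A t Hm Ht Heq nu Hnu 0), Zk0.
    simpl pow. field. repeat split; lra.
  - change (sum_f_R0 (termX m q A t nu) (S N)) with (sum_f_R0 (termX m q A t nu) N + termX m q A t nu (S N)).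
    rewrite IH. unfold termX, Cst.
    rewrite (E_rec m q A t Hm Ht Heq nu Hnu (S N)).
    set (Q := INR q ^ S (S N)).
    replace (INR q ^ S (S (S N))) with (INR q * Q) by reflexivity.
    assert (0 < Q) by (apply pow_lt; lra).
    field. repeat split; lra.
Qed.

Lemma series_X nu (Hnu : cyl_measure m A nu) : is_series (termX m q A t nu) Cst.
Proof. assert (Hl := lnm_pos). assert (Hq2 := q_ge2).
  assert (Hg := lim_g q Hq).
  assert (L1 : is_lim_seq (fun N => / INR q ^ S (S N)) 0).
  { apply (is_lim_seq_le_le (fun _ => 0) _ (fun N => INR (S (S N)) / INR q ^ S (S N))); auto.
    - intros N. assert (0 < INR q ^ S (S N)) by (apply pow_lt; lra).
      assert (1 <= INR (S (S N))) by (replace 1 with (INR 1) by reflexivity; apply le_INR; lia).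
      split; [apply Rlt_le, Rinv_0_lt_compat; auto|]. unfold Rdiv.
      rewrite <- (Rmult_1_l (/ _)) at 1. apply Rmult_le_compat_r; [apply Rlt_le, Rinv_0_lt_compat|]; lra.
    - apply is_lim_seq_const. }
  assert (L2 : is_lim_seq (fun N => Zk m t nu (S N) / INR q ^ S (S N)) 0).
  { apply (is_lim_seq_le_le (fun _ => 0) _ (fun N => Lmax m t * (INR (S (S N)) / INR q ^ S (S N)))).
    - intros N. assert (0 < INR q ^ S (S N)) by (apply pow_lt; lra).
      destruct (Z_bound m A t Hm Ht nu Hnu (S N)) as [Z1 Z2].
      assert (0 <= Lmax m t).
      { unfold Lmax. rewrite sumR_lsum. apply lsum_nonneg. intros y Hy. apply in_seq in Hy.
        assert (1 < t y) by (apply Ht; lia). rewrite <- ln_1. apply Rlt_le, ln_increasing; lra. }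
      assert (INR (S N) <= INR (S (S N))) by (apply le_INR; lia).
      split; [apply Rdiv_le_0_compat; lra|]. unfold Rdiv. rewrite <- Rmult_assoc.
      apply Rmult_le_compat_r; [apply Rlt_le, Rinv_0_lt_compat; auto|]. nra.
    - apply is_lim_seq_const.
    - replace (Finite 0) with (Rbar_mult (Lmax m t) 0) by (simpl; f_equal; ring).
      apply is_lim_seq_scal_l; auto. }
  assert (H : is_lim_seq (sum_n (termX m q A t nu)) Cst).
  { apply (is_lim_seq_ext (fun N => Cst - ((INR q - 1) * ln (sumR m t) / ln (INR m)) * / INR q ^ S (S N)
      - ((INR q - 1) ^ 2 / ln (INR m)) * (Zk m t nu (S N) / INR q ^ S (S N)))).
    - intros N. rewrite sum_n_Reals, partial_X; auto. unfold Rdiv; ring.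
    - replace (Finite Cst) with (Finite (Cst - ((INR q - 1) * ln (sumR m t) / ln (INR m)) * 0 - ((INR q - 1) ^ 2 / ln (INR m)) * 0)) by (f_equal; ring).
      apply is_lim_seq_minus'; [apply is_lim_seq_minus'; [apply is_lim_seq_const|]|];
      apply (is_lim_seq_scal_l _ _ 0); auto. }
  exact H.
Qed.

End Main.


Lemma sum_ge_term (d : nat -> R) N : (forall n, 0 <= d n) -> d N <= sum_n d N.
Proof. intros H. rewrite sum_n_Reals. destruct N; simpl; [lra|].
  assert (0 <= sum_f_R0 d N) by (apply cond_pos_sum; auto). lra. Qed.

Lemma nonneg_series_zero (d : nat -> R) : (forall n, 0 <= d n) -> is_series d 0 -> forall n, d n = 0.
Proof. intros H Hs n. assert (Hl : is_lim_seq (sum_n d) 0) by exact Hs.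
  assert (H1 := is_lim_seq_incr_compare _ _ Hl). assert (sum_n d n <= 0).
  { apply H1. intros k. rewrite sum_Sn. unfold plus; simpl. specialize (H (S k)). lra. }
  assert (d n <= sum_n d n) by (apply sum_ge_term; auto). specialize (H n). lra. Qed.

Section Main2.
Variables (m q : nat) (A : nat -> nat -> bool) (t : nat -> R).
Hypothesis Hm : (2 <= m)%nat.
Hypothesis Hq : (2 <= q)%nat.
Hypothesis Ht : forall i, (i < m)%nat -> 1 < t i.
Hypothesis Heq : forall i, (i < m)%nat -> t i ^ q = sumR m (fun j => entry A i j * t j).

Lemma termH_eq nu (Hnu : cyl_measure m A nu) n :
  termH m q A nu n = (INR q - 1) ^ 2 * (- Nk m nu (S n) / ln (INR m)) / INR q ^ S (S n).
Proof. unfold termH. rewrite (Hk_eq m A nu Hnu). reflexivity. Qed.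

Lemma termK_pos n : 0 < (INR q - 1) ^ 2 / ln (INR m) / INR q ^ S (S n).
Proof. assert (Hl := lnm_pos m q Hm Hq). assert (Hq2 := q_ge2 q Hq).
  apply Rdiv_lt_0_compat; [apply Rdiv_lt_0_compat; auto|apply pow_lt; lra]. apply pow_lt; lra. Qed.

Lemma termH_le nu (Hnu : cyl_measure m A nu) n : 0 <= termH m q A nu n <= termX m q A t nu n.
Proof. rewrite termH_eq; auto. unfold termX. assert (HK := termK_pos n).
  assert (H1 := gibbs_le m q A t Hm Ht Heq nu Hnu (S n)). assert (H2 := N_le0 m A nu Hnu (S n)).
  set (K := (INR q - 1) ^ 2 / ln (INR m) / INR q ^ S (S n)) in *.
  replace ((INR q - 1) ^ 2 * (- Nk m nu (S n) / ln (INR m)) / INR q ^ S (S n)) with (K * (- Nk m nu (S n))).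
  2:{ unfold K. assert (Hl := lnm_pos m q Hm Hq). assert (0 < INR q ^ S (S n)) by (apply pow_lt; assert (Hq2 := q_ge2 q Hq); lra). field. lra. }
  replace ((INR q - 1) ^ 2 * (- Ek m q A t nu (S n) / ln (INR m)) / INR q ^ S (S n)) with (K * (- Ek m q A t nu (S n))).
  2:{ unfold K. assert (Hl := lnm_pos m q Hm Hq). assert (0 < INR q ^ S (S n)) by (apply pow_lt; assert (Hq2 := q_ge2 q Hq); lra). field. lra. }
  split; [apply Rmult_le_pos; lra|apply Rmult_le_compat_l; lra]. Qed.

Lemma main_sec : cyl_measure m A (markov m q A t) /\
  exists smu : R,
    s_is m q A (markov m q A t) smu /\
    forall nu : list nat -> R, cyl_measure m A nu ->
      exists snu : R, s_is m q A nu snu /\ snu <= smu /\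
        (snu = smu -> forall u, nu u = markov m q A t u).
Proof.
  assert (Hmu := markov_cyl m q A t Hm Ht Heq).
  split; auto. exists (Cst m q t). split.
  { unfold s_is. apply is_series_Reals. change (is_series (termH m q A (markov m q A t)) (Cst m q t)).
    apply (is_series_ext (termX m q A t (markov m q A t))).
    - intros n. rewrite termH_eq; auto.
    - apply series_X; auto. }
  intros nu Hnu.
  assert (HX := series_X m q A t Hm Hq Ht Heq nu Hnu).
  assert (exX : ex_series (termX m q A t nu)) by (exists (Cst m q t); auto).
  assert (exH : ex_series (termH m q A nu)).
  { apply (@ex_series_le R_AbsRing R_CompleteNormedModule _ (termX m q A t nu)); auto. intros n.
    destruct (termH_le nu Hnu n) as [H1 H2]. unfold norm; simpl. unfold abs; simpl.
    rewrite Rabs_pos_eq; auto. }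
  exists (Series (termH m q A nu)). split; [|split].
  - unfold s_is. apply is_series_Reals. apply (Series_correct (termH m q A nu)); auto.
  - rewrite <- (is_series_unique _ _ HX). apply Series_le; auto. apply termH_le; auto.
  - intros E.
    assert (Hd : forall n, termX m q A t nu n - termH m q A nu n = 0).
    { apply nonneg_series_zero.
      - intros n. destruct (termH_le nu Hnu n); lra.
      - assert (Hs : Series (fun n => termX m q A t nu n - termH m q A nu n) = 0).
        { rewrite Series_minus; auto. rewrite E, (is_series_unique _ _ HX). ring. }
        rewrite <- Hs. apply Series_correct. apply (ex_series_minus (termX m q A t nu) (termH m q A nu)); auto. }
    assert (HW : forall n u, In u (words m (S n)) -> nu u = markov m q A t u).
    { intros n u Hu. apply (gibbs_eq_words m q A t Hm Ht Heq nu Hnu (S n)); auto.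
      specialize (Hd n).
      assert (HK := termK_pos n).
      assert (Hl := lnm_pos m q Hm Hq). assert (0 < INR q ^ S (S n)) by (apply pow_lt; assert (Hq2 := q_ge2 q Hq); lra).
      replace (termX m q A t nu n - termH m q A nu n) with
        (((INR q - 1) ^ 2 / ln (INR m) / INR q ^ S (S n)) * (Nk m nu (S n) - Ek m q A t nu (S n))) in Hd.
      2:{ rewrite termH_eq; auto. unfold termX. field. lra. }
      apply Rmult_integral in Hd as [Hd|Hd]; lra. }
    intros u. destruct (classic (adm m A u)) as [Ha|Ha].
    + destruct u as [|i w].
      * destruct Hnu as (H0 & _). rewrite H0. reflexivity.
      * apply (HW (length w)). apply (words_in m (i :: w)). apply (adm_forall m A); auto.
    + rewrite (nadm_0 m q A t Hm); auto. destruct Hnu as (_ & _ & _ & He). apply He.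
      intros Hc. apply Ha, cyl_adm; auto.
Qed.
End Main2.

Theorem corollary2p6 (m q : nat) (A : nat -> nat -> bool) (t : nat -> R) :
  (2 <= m)%nat -> (2 <= q)%nat -> primitive01 m A ->
  (forall i, (i < m)%nat -> 1 < t i) ->
  (forall i, (i < m)%nat -> t i ^ q = sumR m (fun j => entry A i j * t j)) ->
  cyl_measure m A (markov m q A t) /\
  exists smu : R,
    s_is m q A (markov m q A t) smu /\
    forall nu : list nat -> R, cyl_measure m A nu ->
      exists snu : R, s_is m q A nu snu /\ snu <= smu /\
        (snu = smu -> forall u, nu u = markov m q A t u).
Proof. intros Hm Hq _ Ht Heq. exact (main_sec m q A t Hm Hq Ht Heq). Qed.
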